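(* Let $(M,d)$ be a homogeneous compact ultrametric space with no isolated points. (a) For every $r>0$, the optimal code of size $|\Pi(r)|$ in $(M,d)$ is unique up to isometry. (b) The symmetry strength of $(M,d)$ is infinite.
   Context: An ultrametric space satisfies $d(x,z)\leq\max(d(x,y),d(y,z))$. For $r>0$, $\Pi(r)$ is the (finite) partition of $M$ into open balls of radius $r$. Subsets $A,B\subseteq M$ are isometric if there is a bijection $f\colon A\to B$ with $d(f(x),f(y))=d(x,y)$; $M$ is homogeneous if every isometry between finite subsets extends to an isometry of $M$ onto itself. $x$ is isolated if some ball around $x$ contains only $x$. An optimal code of size $n$ is an $n$-element subset maximizing the minimum distance between distinct points; unique up to isometry means any two are related by an isometry of $M$. The symmetry strength of $M$ with isometry group $G$ is the supremum of $t$ such that for every size-$t$ subset $T\subseteq M$ there is $g\in G\setminus\{\mathrm{id}\}$ with $gT=T$. *)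

(* Defs.v *)
From Stdlib Require Import Reals List.
Import ListNotations.
Open Scope R_scope.

Section Defs.
Context {M : Type} (d : M -> M -> R).

Definition ultrametric_space : Prop :=
  (forall x y, d x y = 0 <-> x = y) /\
  (forall x y, d x y = d y x) /\
  (forall x y z, d x z <= Rmax (d x y) (d y z)).

Definition is_open (U : M -> Prop) : Prop :=
  forall x, U x -> exists e, 0 < e /\ forall y, d x y < e -> U y.

Definition compact_space : Prop :=
  forall (I : Type) (U : I -> M -> Prop),
    (forall i, is_open (U i)) -> (forall x, exists i, U i x) ->
    exists l : list I, forall x, exists i, In i l /\ U i x.

Definition isometry_of_M (g : M -> M) : Prop :=
  (forall x y, d (g x) (g y) = d x y) /\ (forall y, exists x, g x = y).

Definition isometry_between (A B : list M) (f : M -> M) : Prop :=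
  (forall x, In x A -> In (f x) B) /\
  (forall y, In y B -> exists x, In x A /\ f x = y) /\
  (forall x y, In x A -> In y A -> d (f x) (f y) = d x y).

Definition homogeneous : Prop :=
  forall (A B : list M) (f : M -> M), isometry_between A B f ->
    exists g, isometry_of_M g /\ forall x, In x A -> g x = f x.

Definition isolated (x : M) : Prop :=
  exists e, 0 < e /\ forall y, d x y < e -> y = x.

(** |Pi(r)| = n : the partition of M into open balls of radius r has exactly
    n blocks, i.e. there are n centers, pairwise at distance >= r (distinct
    balls), whose open r-balls cover M. *)
Definition card_Pi (r : R) (n : nat) : Prop :=
  exists c : list M, length c = n /\
    (forall i j, (i < n)%nat -> (j < n)%nat -> i <> j ->
       forall x0, r <= d (nth i c x0) (nth j c x0)) /\
    (forall x, exists y, In y c /\ d x y < r).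

Definition code (n : nat) (C : list M) : Prop := NoDup C /\ length C = n.

Definition separated (C : list M) (delta : R) : Prop :=
  forall x y, In x C -> In y C -> x <> y -> delta <= d x y.

(** C is an optimal code of size n: its minimum distance is maximal among
    all n-element subsets (min-dist C' <= min-dist C for every such C'). *)
Definition optimal_code (n : nat) (C : list M) : Prop :=
  code n C /\
  forall C', code n C' -> forall delta, separated C' delta -> separated C delta.

Definition maps_onto (g : M -> M) (C1 C2 : list M) : Prop :=
  (forall x, In x C1 -> In (g x) C2) /\
  (forall y, In y C2 -> exists x, In x C1 /\ g x = y).

Definition optimal_code_unique (n : nat) : Prop :=
  (exists C, optimal_code n C) /\
  forall C1 C2, optimal_code n C1 -> optimal_code n C2 ->
    exists g, isometry_of_M g /\ maps_onto g C1 C2.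

Definition symmetric_at (t : nat) : Prop :=
  forall T, code t T ->
    exists g, isometry_of_M g /\ (exists x, g x <> x) /\ maps_onto g T T.

(** Symmetry strength = sup { t | symmetric_at t } is infinite. *)
Definition symmetry_strength_infinite : Prop :=
  forall N : nat, exists t : nat, (N <= t)%nat /\ symmetric_at t.

End Defs.

(* Main.v *)
Require Import Defs.
From Stdlib Require Import Reals List.
From Stdlib Require Import ClassicalEpsilon Classical Lra Lia.
Open Scope R_scope.

Lemma um_refl {M : Type} {d : M -> M -> R} (Hum : ultrametric_space d) x :
  d x x = 0.
Proof. destruct Hum as [H _]. apply H; reflexivity. Qed.

Lemma um_nonneg {M : Type} {d : M -> M -> R} (Hum : ultrametric_space d) x y :
  0 <= d x y.
Proof.
  pose proof (um_refl Hum x) as H0.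
  destruct Hum as [_ [Hs Ht]]. pose proof (Ht x y x) as H.
  rewrite (Hs y x) in H. unfold Rmax in H. destruct (Rle_dec _ _); lra.
Qed.

Lemma um_le {M : Type} {d : M -> M -> R} (Hum : ultrametric_space d) x y z e :
  d x y < e -> d y z < e -> d x z < e.
Proof.
  intros. destruct Hum as [_ [_ Ht]]. pose proof (Ht x y z).
  unfold Rmax in *. destruct (Rle_dec _ _); lra.
Qed.

Lemma um_iso {M : Type} {d : M -> M -> R} (Hum : ultrametric_space d) x y z :
  d x y < d x z -> d y z = d x z.
Proof.
  intros H. destruct Hum as [_ [Hs Ht]].
  pose proof (Ht y x z) as H1. pose proof (Ht x y z) as H2.
  rewrite (Hs y x) in H1.
  unfold Rmax in *. destruct (Rle_dec (d x y) (d x z)); destruct (Rle_dec (d x y) (d y z)); lra.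
Qed.

Lemma cover_lemma {M : Type} {d : M -> M -> R} (x0 : M) (Hum : ultrametric_space d)
  (r : R) (c : list M) (Hcov : forall x, exists y, In y c /\ d x y < r)
  (C : list M) : NoDup C -> length C = length c ->
  (forall a b, In a C -> In b C -> a <> b -> r <= d a b) ->
  forall z, In z c -> exists y, In y C /\ d y z < r.
Proof.
  intros HN HL Hs z Hz.
  set (h := fun y => epsilon (inhabits x0) (fun z => In z c /\ d y z < r)).
  assert (Hh : forall y, In (h y) c /\ d y (h y) < r).
  { intro y. apply (epsilon_spec (inhabits x0) (fun z => In z c /\ d y z < r)).
    apply Hcov. }
  assert (HND : NoDup (map h C)).
  { apply NoDup_map_NoDup_ForallPairs; auto.
    intros a b Ha Hb Heq. apply NNPP; intro Hab.
    pose proof (Hs a b Ha Hb Hab).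
    destruct (Hh a) as [_ Ha']. destruct (Hh b) as [_ Hb'].
    rewrite Heq in Ha'.
    assert (d a b < r). { apply um_le with (h b); auto.
      destruct Hum as [_ [Hsy _]]. rewrite Hsy. auto. }
    lra. }
  assert (Hinc : incl c (map h C)).
  { apply NoDup_length_incl; auto.
    - rewrite length_map. lia.
    - intros w Hw. apply in_map_iff in Hw. destruct Hw as [y [<- _]]. apply Hh. }
  apply Hinc in Hz. apply in_map_iff in Hz. destruct Hz as [y [<- Hy]].
  exists y. split; auto. apply Hh.
Qed.

Lemma exists_rho {M : Type} {d : M -> M -> R} (Hum : ultrametric_space d) (x : M) (l : list M) :
  exists rho, 0 < rho /\ forall t, In t l -> t <> x -> rho <= d x t.
Proof.
  induction l as [|t l IH].
  - exists 1. split; [lra|]. intros t [].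
  - destruct IH as [rho [Hr Hl]].
    destruct (classic (t = x)) as [E|E].
    + exists rho. split; auto. intros s [<-|Hs] Hn; [contradiction|auto].
    + assert (0 < d x t).
      { destruct (Rle_lt_or_eq_dec 0 (d x t) (um_nonneg Hum x t)); auto.
        exfalso. apply E. destruct Hum as [Hz _]. symmetry. apply Hz. auto. }
      exists (Rmin rho (d x t)). split. { apply Rmin_pos; auto. }
      intros s [<-|Hs] Hn. apply Rmin_r.
      eapply Rle_trans. apply Rmin_l. auto.
Qed.

Lemma not_iso_pt {M : Type} {d : M -> M -> R} (Hnoiso : forall x, ~ isolated d x) x e :
  0 < e -> exists y, d x y < e /\ y <> x.
Proof.
  intros He. apply NNPP; intro H. apply (Hnoiso x). exists e. split; auto.
  intros y Hy. apply NNPP; intro Hn. apply H. exists y. auto.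
Qed.

Theorem lemma4p18 (M : Type) (d : M -> M -> R) (x0 : M)
  (Hum : ultrametric_space d) (Hcpt : compact_space d)
  (Hhom : homogeneous d) (Hnoiso : forall x, ~ isolated d x) :
  (forall (r : R) (n : nat), 0 < r -> card_Pi d r n -> optimal_code_unique d n) /\
  symmetry_strength_infinite d.
Proof.
  pose proof (um_refl Hum) as Hrefl.
  pose proof (um_nonneg Hum) as Hnn.
  assert (Hsym : forall x y, d x y = d y x) by apply Hum.
  assert (Hzero : forall x y, d x y = 0 -> x = y) by (intros; apply Hum; auto).
  split.
  - intros r n hr [c [Hlen [Hsep Hcov]]].
    assert (csep : forall a b, In a c -> In b c -> a <> b -> r <= d a b).
    { intros a b Ha Hb Hab.
      destruct (In_nth c a x0 Ha) as [i [Hi Ei]].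
      destruct (In_nth c b x0 Hb) as [j [Hj Ej]].
      rewrite <- Ei, <- Ej. apply Hsep; try lia.
      intro; subst; congruence. }
    assert (cND : NoDup c).
    { apply (NoDup_nth c x0). intros i j Hi Hj E.
      destruct (Nat.eq_dec i j); auto. exfalso.
      pose proof (Hsep i j ltac:(lia) ltac:(lia) n0 x0). rewrite E, Hrefl in H. lra. }
    assert (Hcode : code n c) by (split; auto).
    assert (Hopt : optimal_code d n c).
    { split; auto. intros C' [HN' HL'] delta Hd x y Hx Hy Hxy.
      pose proof (csep x y Hx Hy Hxy) as Hr.
      destruct (Rle_or_lt delta (d x y)) as [ok|hlt]; auto. exfalso.
      assert (Hall : forall a b, In a C' -> In b C' -> a <> b -> r <= d a b).
      { intros a b Ha Hb Hab. destruct (Rle_or_lt r (d a b)); auto.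
        pose proof (Hd a b Ha Hb Hab). lra. }
      destruct (cover_lemma x0 Hum r c Hcov C' HN' ltac:(lia) Hall x Hx) as [a [Ha Hax]].
      destruct (cover_lemma x0 Hum r c Hcov C' HN' ltac:(lia) Hall y Hy) as [b [Hb Hby]].
      assert (Hab : a <> b).
      { intro E; subst b. assert (d x y < r). apply um_le with a; auto.
        rewrite Hsym; auto. lra. }
      pose proof (Hd a b Ha Hb Hab).
      assert (E1 : d a y = d x y). { apply um_iso; auto. rewrite Hsym. lra. }
      assert (E2 : d b a = d y a). { apply um_iso; auto. rewrite Hsym. rewrite Hsym in E1. lra. }
      rewrite Hsym, E2, Hsym in H. lra. }
    split. { exists c; auto. }
    intros C1 C2 HC1 HC2.
    assert (S1 : separated d C1 r) by (apply (proj2 HC1) with c; auto; intros a b; apply csep).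
    assert (S2 : separated d C2 r) by (apply (proj2 HC2) with c; auto; intros a b; apply csep).
    destruct HC1 as [[N1 L1] _]. destruct HC2 as [[N2 L2] _].
    set (f := fun x => epsilon (inhabits x0) (fun y => In y C2 /\ d x y < r)).
    assert (Hf : forall x, In (f x) C2 /\ d x (f x) < r).
    { intro x. apply (epsilon_spec (inhabits x0) (fun y => In y C2 /\ d x y < r)).
      destruct (Hcov x) as [z [Hz Hxz]].
      destruct (cover_lemma x0 Hum r c Hcov C2 N2 ltac:(lia) S2 z Hz) as [y [Hy Hyz]].
      exists y. split; auto. apply um_le with z; auto. rewrite Hsym; auto. }
    assert (Hdist : forall x x', In x C1 -> In x' C1 -> d (f x) (f x') = d x x').
    { intros x x' Hx Hx'. destruct (classic (x = x')) as [<-|Hne].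
      - rewrite !Hrefl; auto.
      - pose proof (S1 x x' Hx Hx' Hne).
        destruct (Hf x) as [_ h1]. destruct (Hf x') as [_ h2].
        assert (E1 : d (f x) x' = d x x') by (apply um_iso; auto; lra).
        assert (E2 : d (f x') (f x) = d x' (f x)).
        { apply um_iso; auto. rewrite (Hsym x' (f x)), E1. lra. }
        rewrite (Hsym (f x) (f x')), E2, (Hsym x' (f x)). exact E1. }
    assert (Hinc : incl C2 (map f C1)).
    { apply NoDup_length_incl.
      - apply NoDup_map_NoDup_ForallPairs; auto.
        intros a b Ha Hb E. apply NNPP; intro Hab.
        pose proof (S1 a b Ha Hb Hab). rewrite <- (Hdist a b Ha Hb), E, Hrefl in H. lra.
      - rewrite length_map. lia.
      - intros w Hw. apply in_map_iff in Hw. destruct Hw as [y [<- _]]. apply Hf. }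
    destruct (Hhom C1 C2 f) as [g [Hg Hgf]].
    { split; [|split].
      - intros x _. apply Hf.
      - intros y Hy. apply Hinc in Hy. apply in_map_iff in Hy.
        destruct Hy as [x [E Hx]]. eauto.
      - exact Hdist. }
    exists g. split; auto. split.
    + intros x Hx. rewrite Hgf; auto. apply Hf.
    + intros y Hy. apply Hinc in Hy. apply in_map_iff in Hy.
      destruct Hy as [x [E Hx]]. exists x. split; auto. rewrite Hgf; auto.
  - intros N. exists N. split; [lia|].
    intros T [HTN HTL].
    assert (Hpq : exists p q, p <> q /\ ~ In p T /\ forall t, In t T -> d q t = d p t).
    { destruct T as [|x T'].
      - destruct (not_iso_pt Hnoiso x0 1 ltac:(lra)) as [y [_ Hy]].
        exists x0, y. split; auto. split; auto. intros t [].
      - destruct (exists_rho Hum x T') as [rho [Hrho Hr]].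
        destruct (not_iso_pt Hnoiso x rho Hrho) as [p [Hp Hpx]].
        assert (Hpp : 0 < d x p).
        { destruct (Rle_lt_or_eq_dec 0 (d x p) (Hnn x p)); auto.
          exfalso. apply Hpx. symmetry. apply Hzero. auto. }
        destruct (not_iso_pt Hnoiso p (d x p) Hpp) as [q [Hq Hqp]].
        assert (Eqx : d q x = d p x).
        { apply um_iso; auto. rewrite (Hsym p x); auto. }
        exists p, q. split; [auto|split].
        + intros [E|Hin]. { apply Hpx; auto. }
          assert (p <> x) by auto. pose proof (Hr p Hin H). lra.
        + intros t [<-|Ht]. auto.
          destruct (classic (t = x)) as [->|Htx]. auto.
          pose proof (Hr t Ht Htx).
          assert (E1 : d p t = d x t) by (apply um_iso; [exact Hum | idtac]; lra).
          assert (E2 : d q t = d x t).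
          { apply um_iso; auto. rewrite Hsym, Eqx, Hsym. lra. }
          congruence. }
    destruct Hpq as [p [q [Hpq [HpT Hqt]]]].
    set (f := fun z => if excluded_middle_informative (z = p) then q else z).
    assert (Fp : f p = q).
    { unfold f. destruct (excluded_middle_informative (p = p)); congruence. }
    assert (Fo : forall z, z <> p -> f z = z).
    { intros z Hz. unfold f. destruct (excluded_middle_informative (z = p)); congruence. }
    destruct (Hhom (p :: T) (q :: T) f) as [g [Hg Hgf]].
    { split; [|split].
      - intros x [<-|Hx]. rewrite Fp; left; auto.
        rewrite Fo; [right; auto|]. intros ->; auto.
      - intros y [<-|Hy]. exists p; split; [left|]; auto.
        exists y. split; [right; auto|]. apply Fo. intros ->; auto.
      - intros a b [<-|Ha] [<-|Hb].
        + rewrite Fp, !Hrefl. auto.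
        + rewrite Fp, Fo by (intros ->; auto). apply Hqt; auto.
        + rewrite Fp, Fo by (intros ->; auto). rewrite (Hsym a q), (Hsym a p). apply Hqt; auto.
        + rewrite !Fo by (intros ->; auto). auto. }
    exists g. split; auto. split.
    + exists p. rewrite Hgf by (left; auto). rewrite Fp. auto.
    + split.
      * intros x Hx. rewrite Hgf by (right; auto). rewrite Fo by (intros ->; auto). auto.
      * intros y Hy. exists y. split; auto. rewrite Hgf by (right; auto). apply Fo. intros ->; auto.
Qed.
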